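(* Let $\mathbf{a}$ be a CSCA and $n\in\mathbb{N}$. Then $\mathbf{a}$ possesses gliders with eigenvalues $u^n$ and $u^{-n}$ (i.e. there exist non-zero $\xi,\eta\in\mathcal{P}^2$ with $\mathbf{a}\xi=u^n\xi$ and $\mathbf{a}\eta=u^{-n}\eta$) if and only if $\mathrm{tr}\,\mathbf{a}=u^{-n}+u^n$.
   Context: $\mathcal{P}$ denotes the ring of Laurent polynomials in $u$ over $\mathbb{Z}_2$; $\mathcal{R}$ is the subring of palindromes ($p(u^{-1})=p(u)$). A CSCA (centered symplectic cellular automaton) is a $2\times2$ matrix with entries in $\mathcal{R}$ and determinant $1$, acting on $\mathcal{P}^2$ by matrix multiplication. *)

(* Defs.v *)
(* Laurent polynomials over Z_2 are modelled inside the
   field of fractions K of F_2[u]. *)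
From HB Require Import structures.
From mathcomp Require Import all_boot all_order all_algebra.
Set Implicit Arguments. Unset Strict Implicit. Unset Printing Implicit Defensive.
Import GRing.Theory.
Local Open Scope ring_scope.

Notation K := {fraction {poly 'F_2}}.

Notation tofracK := (@FracField.tofrac {poly 'F_2}).
Notation "x %:F" := (tofracK x).

Definition uK : K := ('X : {poly 'F_2})%:F.

Definition laurent (x : K) : Prop :=
  exists (p : {poly 'F_2}) (k : nat), x = p%:F / uK ^+ k.

(* x = p(u)/u^k is a palindrome: substituting u^{-1} for u gives x back,
   i.e. p(u^{-1}) / u^{-k} = x. *)
Definition palindrome (x : K) : Prop :=
  exists (p : {poly 'F_2}) (k : nat),
    x = p%:F / uK ^+ k /\
    x = (map_poly (fun c : 'F_2 => (c%:P)%:F) p).[uK^-1] * uK ^+ k.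

Definition CSCA (a : 'M[K]_2) : Prop :=
  (forall i j, palindrome (a i j)) /\ \det a = 1.

Definition laurent_vec (v : 'cV[K]_2) : Prop := forall i, laurent (v i 0).

Definition has_glider (a : 'M[K]_2) (lam : K) : Prop :=
  exists xi : 'cV[K]_2, laurent_vec xi /\ xi != 0 /\ a *m xi = lam *: xi.

(* Main.v *)
Require Import Defs.
From HB Require Import structures.
From mathcomp Require Import all_boot all_order all_algebra.
Import GRing.Theory.
Local Open Scope ring_scope.

Lemma det2 (R : comNzRingType) (A : 'M[R]_2) : \det A = A 0 0 * A 1 1 - A 0 1 * A 1 0.
Proof.
rewrite (expand_det_row _ 0) !big_ord_recl big_ord0 addr0 /cofactor !det_mx11.
rewrite /= !mxE /= /bump /= expr0 expr1 mul1r mulN1r mulrN.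
by congr (A _ _ * A _ _ - A _ _ * A _ _); apply: val_inj.
Qed.

Lemma tr2 (R : comNzRingType) (A : 'M[R]_2) : \tr A = A 0 0 + A 1 1.
Proof. rewrite /mxtrace !big_ord_recl big_ord0 addr0; by congr (A _ _ + A _ _); apply: val_inj. Qed.

Lemma frac_repr (x : K) : exists p q, q != 0 /\ x = p%:F / q%:F.
Proof.
elim/quotW: x => r.
exists (\n_r), (\d_r); split; first exact: denom_ratioP.
apply: (canRL (mulfK _)); first by rewrite tofrac_eq0 denom_ratioP.
unlock FracField.tofrac; rewrite !piE.
apply/eqmodP; rewrite /= FracField.equivfE /FracField.mulf /=.
rewrite !numden_Ratio ?mulf_neq0 ?oner_eq0 ?denom_ratioP //=.
by rewrite !mulr1 mulrC.
Qed.

From mathcomp Require Import ring.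

Lemma alg1 (F : comNzRingType) (l t : F) : 1 - l * t + l ^+ 2 = 0 -> l * t = l * l + 1.
Proof. move=> H; rewrite -[LHS]addr0 -H; ring. Qed.

Lemma alg2 (F : comNzRingType) (l : F) : 1 - (l * l + 1) + l ^+ 2 = 0.
Proof. ring. Qed.

Lemma alg3 (F : fieldType) (p q0 q1 : F) : q0 != 0 -> (q0 * q1) * (p / q0) = p * q1.
Proof. by move=> h; rewrite (mulrC q0) -mulrA (mulrCA q0) mulfV // mulr1 mulrC. Qed.

Lemma alg4 (F : fieldType) (p q0 q1 : F) : q1 != 0 -> (q0 * q1) * (p / q1) = p * q0.
Proof. by move=> h; rewrite [q0 * q1]mulrC alg3. Qed.

Lemma uK_neq0 : uK != 0.
Proof. by rewrite /uK tofrac_eq0 polyX_eq0. Qed.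

Lemma detM (a : 'M[K]_2) (l : K) : \det a = 1 ->
  \det (a - l%:M) = 1 - l * \tr a + l ^+ 2.
Proof.
move=> da; rewrite det2 tr2 !mxE /=.
have : \det a = 1 by [].
rewrite det2 => <-. rewrite /=. ring.
Qed.

Lemma glider_iff (a : 'M[K]_2) (l : K) : \det a = 1 -> l != 0 ->
  has_glider a l <-> \tr a = l + l^-1.
Proof.
move=> da lnz; split.
  case=> xi [_ [xnz axi]].
  have Mxi : (a - l%:M) *m xi = 0 by rewrite mulmxBl mul_scalar_mx axi subrr.
  have : \det (a - l%:M)^T == 0.
    apply/det0P; exists xi^T; first by rewrite trmx_eq0.
    by rewrite -trmx_mul Mxi trmx0.
  rewrite det_tr detM // => /eqP H.
  apply: (mulfI lnz); rewrite mulrDr mulfV //.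
  exact: alg1.
move=> ht.
have : \det (a - l%:M)^T == 0.
  by rewrite det_tr detM // ht mulrDr mulfV // alg2.
case/det0P => v vnz vM.
set w := v^T.
have Mw : (a - l%:M) *m w = 0 by rewrite -(trmxK (_ *m _)) trmx_mul trmxK vM trmx0.
have aw : a *m w = l *: w.
  by apply/eqP; rewrite -subr_eq0 -mul_scalar_mx -mulmxBl Mw.
have wnz : w != 0 by rewrite trmx_eq0.
have [p0 [q0 [q0nz e0]]] := frac_repr (w 0 0).
have [p1 [q1 [q1nz e1]]] := frac_repr (w 1 0).
exists ((q0 * q1)%:F *: w); split; last split.
- move=> i; rewrite mxE.
  have -> : i = (if val i == 0%N then 0 else 1).
    by apply: val_inj; case: i => [[|[|]]].
  case: (_ == _).
    exists (p0 * q1), 0%N; rewrite expr0 divr1 e0 !tofracM.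
    apply: alg3; by rewrite tofrac_eq0.
  exists (p1 * q0), 0%N; rewrite expr0 divr1 e1 !tofracM.
  apply: alg4; by rewrite tofrac_eq0.
- by rewrite scalemx_eq0 negb_or tofrac_eq0 mulf_neq0.
- by rewrite -scalemxAr aw !scalerA; congr (_ *: _); exact: mulrC.
Qed.

Theorem mainTheorem3 (a : 'M[K]_2) (n : nat) :
  CSCA a ->
  (has_glider a (uK ^+ n) /\ has_glider a (uK ^- n)) <->
  \tr a = uK ^- n + uK ^+ n.
Proof.
case=> _ da.
have nz : uK ^+ n != 0 by apply: expf_neq0; exact: uK_neq0.
have nz' : uK ^- n != 0 by rewrite invr_eq0.
split.
  case=> /(@glider_iff a _ da nz) H _; rewrite H; exact: addrC.
move=> ht; split.
  apply/(@glider_iff a _ da nz); rewrite ht; exact: addrC.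
apply/(@glider_iff a _ da nz'); rewrite invrK ht; reflexivity.
Qed.
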